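(* Let $q(n)$ denote the number of partitions of $n$ into distinct parts, with $q(0)=1$ and $q(n)=0$ for $n<0$, and define $s(n)=q(n)-2q(n-1)+q(n-2)$. Then for every integer $n\ge 6$, $s(n)$ equals the number of partitions of $n$ with parts $q_1\ge q_2\ge\dots\ge q_h$ such that $h\ge 4$, $q_j-q_{j+1}\in\{0,1\}$ for all $1\le j<h$, $q_1=q_2$, and the three smallest parts are $q_{h-2}=3$, $q_{h-1}=2$, $q_h=1$.
   Context: $q(n)$ counts strict partitions (partitions into distinct parts) of $n$. *)

(* Defs.v *)
From mathcomp Require Import all_boot all_order all_algebra.
Set Implicit Arguments. Unset Strict Implicit. Unset Printing Implicit Defensive.

Definition is_partition (n : nat) (s : seq nat) : bool :=
  [&& sorted geq s, all (fun x => 0 < x) s & sumn s == n].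

Fixpoint seqs_len (b k : nat) : seq (seq nat) :=
  match k with
  | 0 => [:: [::]]
  | k'.+1 => [seq x :: t | x <- iota 1 b, t <- seqs_len b k']
  end.

Definition seqs_upto (b k : nat) : seq (seq nat) :=
  flatten [seq seqs_len b l | l <- iota 0 k.+1].

(* Every partition of n has at most n parts, each at most n, so this
   counts all partitions of n satisfying P (each exactly once, since
   seqs_upto enumerates without repetition). *)
Definition npart (P : seq nat -> bool) (n : nat) : nat :=
  count (fun s => is_partition n s && P s) (seqs_upto n n).

Definition q (n : nat) : nat := npart (fun s => uniq s) n.

Definition qZ (m : int) : int :=
  match m with Posz k => (q k)%:Z | Negz _ => 0%R end.

Definition s (n : nat) : int :=
  (qZ n%:Z - 2%:Z * qZ (n%:Z - 1) + qZ (n%:Z - 2))%R.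

Definition special (t : seq nat) : bool :=
  [&& 4 <= size t,
      sorted (fun a b => (b <= a) && (a <= b.+1)) t,
      nth 0 t 0 == nth 0 t 1
    & drop (size t - 3) t == [:: 3; 2; 1]].

(* Main.v *)
Require Import Defs.
From mathcomp Require Import all_boot all_order all_algebra.
From mathcomp Require Import zify.
Set Implicit Arguments. Unset Strict Implicit. Unset Printing Implicit Defensive.


Lemma mem_seqs_len b k s : (s \in seqs_len b k) = (size s == k) && all (fun x => 0 < x <= b) s.
Proof.
elim: k s => [|k IH] [|x s] //=.
  by apply/negbTE/allpairsPdep => -[? [? [_ _ //]]].
apply/idP/idP.
  move=> /allpairsPdep [y [t [Hy Ht [-> ->]]]]; move: Ht; rewrite IH eqSS => /andP [-> ->].
  by move: Hy; rewrite mem_iota /= andbT; lia.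
move=> /andP [Hs /andP [Hx Ha]]; apply/allpairsPdep; exists x, s; split => //.
  by rewrite mem_iota; lia.
by rewrite IH -eqSS Hs.
Qed.

Lemma uniq_seqs_len b k : uniq (seqs_len b k).
Proof.
elim: k => [|k IH] //=.
apply: allpairs_uniq => //; first exact: iota_uniq.
by move=> [x1 y1] [x2 y2] _ _ /= [-> ->].
Qed.

Lemma uniq_seqs_from b m k : uniq (flatten [seq seqs_len b l | l <- iota m k]).
Proof.
elim: k m => [|k IH] m //=.
rewrite cat_uniq uniq_seqs_len IH andbT.
apply/hasP => -[s /flatten_mapP [l Hl Hs] Hs'].
move: Hl Hs Hs'; rewrite mem_iota !mem_seqs_len => Hl /andP[/eqP H1 _] /andP[/eqP H2 _].
lia.
Qed.

Lemma uniq_seqs_upto b k : uniq (seqs_upto b k).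
Proof. exact: uniq_seqs_from. Qed.

Lemma sumn_ge_size s : all (fun x => 0 < x) s -> size s <= sumn s.
Proof. elim: s => //= x s IH /andP [H1 H2]; have := IH H2; lia. Qed.

Lemma sumn_ge_mem s x : x \in s -> x <= sumn s.
Proof. elim: s => //= y s IH; rewrite in_cons => /orP [/eqP ->|/IH]; lia. Qed.

Lemma part_in_upto n s : is_partition n s -> s \in seqs_upto n n.
Proof.
move=> /and3P [_ Hp /eqP Hs].
apply/flatten_mapP; exists (size s).
  rewrite mem_iota; have := sumn_ge_size Hp; lia.
rewrite mem_seqs_len eqxx /=; apply/allP => x Hx.
have := sumn_ge_mem Hx; move/allP: Hp => /(_ x Hx); lia.
Qed.

Lemma npart_le (P Q : seq nat -> bool) n m (f g : seq nat -> seq nat) :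
  (forall s, is_partition n s -> P s -> is_partition m (f s) && Q (f s)) ->
  (forall s, is_partition n s -> P s -> g (f s) = s) ->
  npart P n <= npart Q m.
Proof.
move=> Hf Hg; rewrite /npart -!size_filter.
set L1 := filter _ _; set L2 := filter _ _.
have -> : size L1 = size (map f L1).
  by rewrite size_map.
apply: uniq_leq_size.
  rewrite map_inj_in_uniq; first exact/filter_uniq/uniq_seqs_upto.
  move=> x y; rewrite !mem_filter => /andP [/andP [Hx1 Hx2] _] /andP [/andP [Hy1 Hy2] _] E.
  by rewrite -(Hg _ Hx1 Hx2) E Hg.
move=> y /mapP [x]; rewrite mem_filter => /andP [/andP [Hx1 Hx2] _] ->.
rewrite mem_filter Hf //=; case/andP: (Hf _ Hx1 Hx2) => H _.
exact: part_in_upto.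
Qed.

Lemma npart_eq (P Q : seq nat -> bool) n m (f g : seq nat -> seq nat) :
  (forall s, is_partition n s -> P s -> is_partition m (f s) && Q (f s)) ->
  (forall s, is_partition m s -> Q s -> is_partition n (g s) && P (g s)) ->
  (forall s, is_partition n s -> P s -> g (f s) = s) ->
  (forall s, is_partition m s -> Q s -> f (g s) = s) ->
  npart P n = npart Q m.
Proof.
move=> H1 H2 H3 H4; apply/eqP; rewrite eqn_leq.
by rewrite (npart_le H1 H3) (npart_le H2 H4).
Qed.

Lemma npart_split (P R : seq nat -> bool) n :
  npart P n = npart (fun s => P s && R s) n + npart (fun s => P s && ~~ R s) n.
Proof.
rewrite /npart; elim: (seqs_upto n n) => //= x l ->.
by case: (is_partition n x); case: (P x); case: (R x) => /=; lia.
Qed.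

Lemma npart_ext (P Q : seq nat -> bool) n :
  (forall s, is_partition n s -> P s = Q s) -> npart P n = npart Q n.
Proof.
move=> H; rewrite /npart; apply: eq_count => s.
by case E: (is_partition n s) => //=; rewrite H.
Qed.

Definition gtn' (a b : nat) := b < a.
Definition dp n (s : seq nat) := [&& sorted gtn' s, all (fun x => 0 < x) s & sumn s == n].

Lemma gtn'_trans : transitive gtn'.
Proof. rewrite /gtn' => a b c; lia. Qed.

Lemma part_uniq n s : is_partition n s && uniq s = dp n s.
Proof.
rewrite /is_partition /dp.
case H: (sorted gtn' s).
  have -> : sorted geq s by apply: sub_sorted H => a b; rewrite /gtn'; lia.
  rewrite (sorted_uniq gtn'_trans _ H) ?andbT //.
  by rewrite /gtn' => a; lia.
apply/negbTE; apply/negP => /andP [/and3P [Hs _ _] Hu].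
move/negP: H; apply; apply/(sortedP 0) => i Hi.
have := (elimT (sortedP 0) Hs i Hi).
have : nth 0 s i != nth 0 s i.+1.
  by rewrite nth_uniq // ?(ltn_eqF (ltnSn i)) // ltnW.
rewrite /gtn' /=; lia.
Qed.

Lemma npart_eqU (P Q : seq nat -> bool) n m (f g : seq nat -> seq nat) :
  (forall s, dp n s -> P s -> dp m (f s) && Q (f s)) ->
  (forall s, dp m s -> Q s -> dp n (g s) && P (g s)) ->
  (forall s, dp n s -> P s -> g (f s) = s) ->
  (forall s, dp m s -> Q s -> f (g s) = s) ->
  npart (fun s => uniq s && P s) n = npart (fun s => uniq s && Q s) m.
Proof.
move=> H1 H2 H3 H4; apply: (npart_eq (f := f) (g := g)) => s Hp /andP [Hu HP].
- have := H1 s; rewrite -!part_uniq Hp Hu => /(_ isT HP) /andP [/andP [-> ->] ->] //.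
- have := H2 s; rewrite -!part_uniq Hp Hu => /(_ isT HP) /andP [/andP [-> ->] ->] //.
- by apply: H3; rewrite // -part_uniq Hp Hu.
- by apply: H4; rewrite // -part_uniq Hp Hu.
Qed.

Definition top2 (s : seq nat) := nth 0 s 0 == (nth 0 s 1).+1.
Definition top3 (s : seq nat) := nth 0 s 1 == (nth 0 s 2).+1.
Definition lst1 (s : seq nat) := last 0 s == 1.

Definition dechead (s : seq nat) := if s is x :: r then x.-1 :: r else [::].
Definition inchead (s : seq nat) := if s is x :: r then x.+1 :: r else [::].

Lemma stepI n : npart (fun s => uniq s && ~~ top2 s) n.+2 = npart (fun s => uniq s && true) n.+1.
Proof.
apply: (npart_eqU (f := dechead) (g := inchead)).
- move=> [|x [|y r]] //; rewrite /dp /top2 /gtn' /=.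
    by rewrite !andbT; lia.
  move=> /and3P [/andP [H1 H2] /and3P [H3 H4 H5] H6] H7.
  rewrite H2 H4 H5 !andbT; lia.
- move=> [|x [|y r]] //; rewrite /dp /top2 /gtn' /=.
    by rewrite !andbT; lia.
  move=> /and3P [/andP [H1 H2] /and3P [H3 H4 H5] H6] _.
  rewrite H2 H4 H5 !andbT; lia.
- move=> [|x r] //; rewrite /dp /= => /and3P [_ /andP [H _] _] _.
  by rewrite prednK.
- by move=> [|x r].
Qed.

Definition droplast (s : seq nat) := take (size s).-1 s.
Lemma droplast_rcons t x : droplast (rcons t x) = t.
Proof. by rewrite /droplast size_rcons /= -cats1 take_size_cat. Qed.

Lemma last_pos z t : 0 < z -> all (leq 1) t -> 0 < last z t.
Proof. by elim: t z => //= a t IH z _ /andP [H1 H2]; apply: IH. Qed.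

Lemma stepII n : npart (fun s => uniq s && (top2 s && lst1 s)) n.+4 =
                 npart (fun s => uniq s && (top2 s && ~~ lst1 s)) n.+3.
Proof.
apply: (npart_eqU (f := droplast) (g := fun t => rcons t 1)).
- case/lastP => [|t x] //; rewrite droplast_rcons.
  case: t => [|y [|z t]]; rewrite /dp /top2 /lst1 /gtn' /= ?rcons_path ?last_rcons ?all_rcons ?sumn_rcons //=.
  1,2: lia.
  move=> /and3P [/and3P [H1 H2 H3] /and3P [H4 H5 /andP [H6 H7]] H8] /andP [H9 H10].
  rewrite H2 H7 /=; lia.
- case => [|y [|z t]]; rewrite /dp /top2 /lst1 /gtn' /= ?rcons_path ?last_rcons ?all_rcons ?sumn_rcons //=.
  1: lia.
  move=> /and3P [/andP [H1 H2] /and3P [H4 H5 H7] H8] /andP [H9 H10].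
  have := last_pos H5 H7.
  rewrite H2 H7 /=; lia.
- case/lastP => [|t x] //; rewrite droplast_rcons.
  by rewrite /lst1 last_rcons => _ /andP [_ /eqP ->].
- by move=> t _ _; rewrite droplast_rcons.
Qed.

Definition dec2 (s : seq nat) := if s is x :: y :: r then x.-1 :: y.-1 :: r else s.
Definition inc2 (s : seq nat) := if s is x :: y :: r then x.+1 :: y.+1 :: r else s.

Lemma stepIII n : npart (fun s => uniq s && ((top2 s && ~~ lst1 s) && ~~ top3 s)) n.+4.+2 =
                  npart (fun s => uniq s && (top2 s && ~~ lst1 s)) n.+4.
Proof.
apply: (npart_eqU (f := dec2) (g := inc2)).
- case => [|x [|y [|z r]]]; rewrite /dp /top2 /top3 /lst1 /gtn' /=.
  1,2,3: lia.
  move=> /and3P [/and3P [H1 H2 H3] /and4P [H4 H5 H6 H7] H8].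
  rewrite H3 H7 /=; lia.
- case => [|x [|y [|z r]]]; rewrite /dp /top2 /top3 /lst1 /gtn' /=.
  1,2,3: lia.
  move=> /and3P [/and3P [H1 H2 H3] /and4P [H4 H5 H6 H7] H8].
  rewrite H3 H7 /=; lia.
- case => [|x [|y r]] //; rewrite /dp /= => /and3P [_ /and3P [H1 H2 _] _] _.
  by rewrite !prednK.
- by case => [|x [|y r]].
Qed.

Definition pconj (s : seq nat) := [seq count (leq j) s | j <- iota 1 (head 0 s)].

Lemma geq_trans : transitive geq.
Proof. move=> a b c; lia. Qed.

Lemma count_zero j s : (forall y, y \in s -> y < j) -> count (leq j) s = 0.
Proof.
move=> H; apply/eqP; rewrite -leqn0 leqNgt -has_count; apply/hasPn => y /H; lia.
Qed.

Lemma countK s j k : sorted geq s -> 0 < j -> (k < count (leq j) s) = (j <= nth 0 s k).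
Proof.
elim: s k => [|x s IH] k /=; first by rewrite nth_nil; lia.
move=> Hp Hj.
have Hs := path_sorted Hp.
have Ha := order_path_min geq_trans Hp.
case: (leqP j x) => Hjx.
  case: k => [|k] /=; first by rewrite Hjx.
  by rewrite add1n ltnS IH.
rewrite count_zero; last first.
  by move=> y Hy; move/allP: Ha => /(_ y Hy); lia.
case: k => [|k] /=; first by lia.
case: (ltnP k (size s)) => Hk.
    move/allP: Ha => /(_ _ (mem_nth 0 Hk)) /= H.
  have H' : nth 0 s k < j by lia.
  by rewrite addn0 ltn0; apply/esym/negbTE; rewrite -ltnNge.
rewrite nth_default // addn0 ltn0; apply/esym/negbTE; rewrite -ltnNge; lia.
Qed.

Lemma conj_size s : size (pconj s) = head 0 s.
Proof. by rewrite size_map size_iota. Qed.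

Lemma conj_nth s i : i < head 0 s -> nth 0 (pconj s) i = count (leq i.+1) s.
Proof. by move=> H; rewrite (nth_map 0) ?size_iota // nth_iota. Qed.

Lemma conj_sorted s : sorted geq (pconj s).
Proof.
apply/(sortedP 0) => i; rewrite conj_size => Hi.
rewrite !conj_nth; try lia.
by apply: sub_count => y /=; lia.
Qed.

Lemma conj_pos s : sorted geq s -> all (fun x => 0 < x) (pconj s).
Proof.
move=> Hs; apply/allP => y /mapP [j]; rewrite mem_iota => Hj ->.
rewrite countK //; last lia.
by case: s Hs Hj => [|x s] /= _; lia.
Qed.

Lemma count_iota_le a M : count (fun j => j <= a) (iota 1 M) = minn a M.
Proof.
elim: M => [|M IH]; first by rewrite /=; lia.
have -> : iota 1 M.+1 = iota 1 M ++ [:: M.+1].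
  by rewrite -(addn1 M) iotaD add1n addn1.
by rewrite count_cat IH /=; lia.
Qed.

Lemma sumn_map_add (L : seq nat) (f g : nat -> nat) :
  sumn [seq f j + g j | j <- L] = sumn (map f L) + sumn (map g L).
Proof. by elim: L => //= a L ->; lia. Qed.

Lemma conj_sum_gen s M : all (fun x => x <= M) s ->
  sumn [seq count (leq j) s | j <- iota 1 M] = sumn s.
Proof.
elim: s => [|x s IH] /=.
  by elim: (iota 1 M).
move=> /andP [Hx Ha].
rewrite (sumn_map_add _ (fun j => nat_of_bool (j <= x))) IH //.
by rewrite sumn_count count_iota_le; lia.
Qed.

Lemma sorted_head_max s : sorted geq s -> all (fun x => x <= head 0 s) s.
Proof.
case: s => //= x s Hp; rewrite leqnn /=.
by apply/allP => y Hy; move/allP: (order_path_min geq_trans Hp) => /(_ y Hy).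
Qed.

Lemma conj_sum s : sorted geq s -> sumn (pconj s) = sumn s.
Proof. by move=> Hs; apply: conj_sum_gen; apply: sorted_head_max. Qed.

Lemma count_pos s : all (fun x => 0 < x) s -> count (leq 1) s = size s.
Proof. by elim: s => //= x s IH /andP [-> /IH ->]. Qed.

Lemma conj_head s : all (fun x => 0 < x) s -> head 0 (pconj s) = size s.
Proof.
case: s => [|x s] // Hp.
have Hx : 0 < x by case/andP: Hp.
by rewrite /pconj /=; case: x Hx Hp => [|x'] //= _ Hp; rewrite count_pos.
Qed.

Lemma conjK s : sorted geq s -> all (fun x => 0 < x) s -> pconj (pconj s) = s.
Proof.
move=> Hs Hp.
have Hsz : size (pconj (pconj s)) = size s by rewrite conj_size conj_head.
apply: (eq_from_nth (x0 := 0) Hsz) => k Hk.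
rewrite Hsz in Hk.
rewrite conj_nth; last by rewrite conj_head.
rewrite /pconj count_map.
rewrite (eq_in_count (a2 := fun j => j <= nth 0 s k)); last first.
  move=> j; rewrite mem_iota => Hj /=.
  by rewrite -countK //; lia.
rewrite count_iota_le.
have := elimT allP (sorted_head_max Hs) _ (mem_nth 0 Hk) => /= H.
lia.
Qed.

Lemma count_all (a : pred nat) s : all a s -> count a s = size s.
Proof. by move=> H; apply/eqP; rewrite -all_count. Qed.

Lemma count_none (a : pred nat) s : (forall y, y \in s -> ~~ a y) -> count a s = 0.
Proof. by move=> H; apply/eqP; rewrite -leqn0 leqNgt -has_count; apply/hasPn. Qed.

Lemma cnt_split j s : count (leq j) s = count (leq j.+1) s + count (pred1 j) s.
Proof.
elim: s => //= x s ->.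
by case: (ltngtP j x) => H /=; lia.
Qed.

Lemma path_last z r : path gtn' z r -> all (fun y => last z r <= y) (z :: r).
Proof.
elim: r z => [|a r IH] z /=; first by rewrite leqnn.
move=> /andP [H1 H2]; have := IH a H2 => /= /andP [H3 H4].
rewrite H3 H4 /gtn' andbT; move: H1; rewrite /gtn'; lia.
Qed.

Definition Tp (s : seq nat) := (top2 s && ~~ lst1 s) && top3 s.

Lemma T_to_special n s : dp n s -> Tp s -> is_partition n (pconj s) && special (pconj s).
Proof.
move=> Hd HT.
have Hu : uniq s by have := part_uniq n s; rewrite Hd => /andP [].
have Hsg : sorted geq s.
  by case/and3P: Hd => H _ _; apply: sub_sorted H => a b; rewrite /gtn'; lia.
have Hpos : all (fun x => 0 < x) s by case/and3P: Hd.
have Hsum : sumn s = n by case/and3P: Hd => _ _ /eqP.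
have -> : is_partition n (pconj s).
  by rewrite /is_partition conj_sorted conj_pos // conj_sum // Hsum eqxx.
move: Hd HT; case: s Hu Hsg Hpos Hsum => [|x [|y [|z r]]] Hu Hsg Hpos Hsum;
  rewrite /dp /Tp /top2 /top3 /lst1 /gtn' /=.
1,2,3: lia.
move=> /and3P [/and3P [H1 H2 H3] /and4P [H4 H5 H6 H7] H8] /andP [/andP [/eqP Ex Hl] /eqP Ey].
have Hall := path_last H3.
have Hlp := last_pos H6 H7.
have Hz2 : 2 <= last z r by move: Hl; lia.
move: Hall => /= /andP [Hlz Hall].
have Hr : all (gtn' z) r by apply: order_path_min H3; exact: gtn'_trans.
subst x y.
have [w Ew] : exists w, z = w.+2 by exists z.-2; lia.
subst z.
have Hr' : forall j, w.+2 <= j -> count (leq j) r = 0.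
  move=> j Hj; apply: count_zero => v Hv.
  by move/allP: Hr => /(_ v Hv); rewrite /gtn'; lia.
have Ha2 : all (leq 2) [:: w.+4, w.+3, w.+2 & r].
  rewrite /=; apply/allP => v Hv.
  by move/allP: Hall => /(_ v Hv); lia.
rewrite /special conj_size.
have -> : head 0 [:: w.+4, w.+3, w.+2 & r] = w.+4 by [].
apply/and4P; split => //.
- apply/(sortedP 0) => i; rewrite conj_size => Hi.
  have {}Hi : i.+1 < w.+4 by [].
  rewrite !conj_nth; [|exact: ltnW|exact: Hi].
  have := cnt_split i.+1 [:: w.+4, w.+3, w.+2 & r].
  have : count (pred1 i.+1) [:: w.+4, w.+3, w.+2 & r] <= 1 by rewrite count_uniq_mem //; case: (_ \in _).
  lia.
- rewrite !conj_nth //.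
  by rewrite (count_all Hpos) (count_all Ha2).
  have -> : w.+4 - 3 = w.+1 by lia.
  rewrite /pconj -map_drop.
  have -> : head 0 [:: w.+4, w.+3, w.+2 & r] = w.+4 by [].
  rewrite drop_iota.
  have -> : w.+4 - w.+1 = 3 by lia.
  rewrite add1n /= !Hr'; [by apply/eqP; congr [:: _; _; _]; lia | lia..].
Qed.

Lemma cover x t : path (fun a b => (b <= a) && (a <= b.+1)) x t ->
  forall v, last x t <= v <= x -> v \in x :: t.
Proof.
elim: t x => [|y t IH] x /=.
  by move=> _ v Hv; rewrite inE; apply/eqP; lia.
move=> /andP [/andP [H1 H2] Hp] v Hv.
case: (ltngtP v x) => Hvx.
- rewrite inE; apply/orP; right; apply: IH => //; lia.
- lia.
- by rewrite inE Hvx eqxx.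
Qed.

Lemma special_to_T n t : is_partition n t -> special t -> dp n (pconj t) && Tp (pconj t).
Proof.
move=> /and3P [Hs Hp /eqP Hsum] /and4P [Hsz Hst Ht01 /eqP Hdrop].
set L := size t in Hsz Hdrop.
have Hn : forall i, i < 3 -> nth 0 t (L - 3 + i) = nth 0 [:: 3; 2; 1] i.
  by move=> i _; rewrite -Hdrop nth_drop.
have Hlast : last 0 t = 1.
  have := Hn 2 isT; have -> : L - 3 + 2 = L.-1 by lia.
  by rewrite nth_last.
have HL3 : nth 0 t (L - 3) = 3 by have := Hn 0 isT; rewrite addn0.
have HM3 : 3 <= head 0 t.
  have := sorted_leq_nth geq_trans (fun x => leqnn x) 0 Hs 0 (L - 3).
  rewrite HL3 !inE /= => H; rewrite -nth0; apply: H; lia.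
have Hcov : forall v, 0 < v <= head 0 t -> v \in t.
  move: Hst Hlast; case: (t) => [|x t'] //= Hst Hlast v Hv.
  by apply: (cover Hst); lia.
have Et : t = take (L - 3) t ++ [:: 3; 2; 1] by rewrite -Hdrop cat_take_drop.
have Hu3 : all (fun a => 3 <= a) (take (L - 3) t).
  move: Hs; rewrite (sorted_pairwise geq_trans) [X in pairwise _ X]Et pairwise_cat => /and3P [H _ _].
  by move: H; rewrite allrel_consr => /andP [H1 _].
have Hc : forall j, j \in [:: 1; 2] -> count (pred1 j) t = 1.
  move=> j Hj; rewrite Et count_cat count_none.
    by move: Hj; rewrite !inE => /orP [] /eqP ->.
  move=> y Hy; move/allP: Hu3 => /(_ y Hy) /=.
  by move: Hj; rewrite !inE => /orP [] /eqP ->; lia.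
set M := head 0 t in HM3 Hcov.
have HsM : size (pconj t) = M by rewrite conj_size.
have Hnt1 : nth 0 t 1 = M by rewrite -(eqP Ht01) nth0.
apply/andP; split.
  rewrite /dp conj_pos // conj_sum // Hsum eqxx andbT.
  rewrite andbT; apply/(sortedP 0) => i; rewrite HsM => Hi.
  rewrite !conj_nth; try lia.
  rewrite /gtn' (cnt_split i.+1).
  have : 0 < count (pred1 i.+1) t by rewrite -has_count has_pred1 Hcov //; lia.
  lia.
rewrite /Tp /top2 /top3 /lst1 !conj_nth; try lia.
rewrite (cnt_split 1) (cnt_split 2) !Hc // !addn1 !eqxx /=.
rewrite -nth_last HsM conj_nth; last lia.
have : 1 < count (leq M.-1.+1) t by rewrite countK //= ?Hnt1; lia.
lia.
Qed.

Lemma stepIV n : npart (fun s => uniq s && Tp s) n = npart special n.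
Proof.
apply: (npart_eq (f := pconj) (g := pconj)).
- move=> s Hp /andP [Hu HT]; apply: T_to_special HT.
  by rewrite -part_uniq Hp Hu.
- move=> t Hp Hsp; have := special_to_T Hp Hsp => /andP [Hd ->].
  by rewrite andbT; rewrite -part_uniq in Hd.
- by move=> s /and3P [Hs Hpos _] _; rewrite conjK.
- by move=> s /and3P [Hs Hpos _] _; rewrite conjK.
Qed.

Definition A k := npart (fun s => uniq s && top2 s) k.
Definition A1 k := npart (fun s => uniq s && (top2 s && lst1 s)) k.
Definition A0 k := npart (fun s => uniq s && (top2 s && ~~ lst1 s)) k.
Definition TT k := npart (fun s => uniq s && Tp s) k.

Lemma eqI m : q m.+2 = A m.+2 + q m.+1.
Proof.
rewrite /q /A (npart_split _ top2); congr (_ + _).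
rewrite stepI; apply: npart_ext => s _; exact: andbT.
Qed.

Lemma eqA m : A m = A1 m + A0 m.
Proof.
rewrite /A (npart_split _ lst1) /A1 /A0; congr (_ + _); apply: npart_ext => s _;
  by rewrite andbA.
Qed.

Lemma eqA1 m : A1 m.+4 = A0 m.+3.
Proof. exact: stepII. Qed.

Lemma eqA0 m : A0 m.+4.+2 = TT m.+4.+2 + A0 m.+4.
Proof.
rewrite /A0 (npart_split _ top3) -stepIII /TT; congr (_ + _);
  apply: npart_ext => s _; rewrite /Tp; case: (uniq s); case: (top2 s); case: (lst1 s); case: (top3 s) => //.
Qed.

Theorem corollary1p5 (n : nat) : 6 <= n -> s n = Posz (npart special n).
Proof.
case: n => [|[|[|[|[|[|m]]]]]] // _.
rewrite -stepIV -/(TT _) /s.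
have -> : (Posz m.+4.+2 - 1 = Posz m.+4.+1)%R by lia.
have -> : (Posz m.+4.+2 - 2 = Posz m.+4)%R by lia.
rewrite /qZ.
have E1 := eqI m.+4. have E2 := eqI m.+3.
have E3 := eqA m.+4.+2. have E4 := eqA m.+4.+1.
have E5 := eqA1 m.+2. have E6 := eqA1 m.+1.
have E7 := eqA0 m.
lia.
Qed.
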